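(* For every $t > 0$, at least one node is active throughout $[\max\{0, t-2D\}, t+D]$.
   Context: Consider an asynchronous message-passing system whose composition changes over time. An adversary generates, for each node $p$, at most one Enter($p$), at most one Leave($p$) and at most one Crash($p$) signal (a Leave($p$) signal for a crashed node $p$ may be generated at another active node; such forced leaves also count as leaves). A node is present at time $t$ if it has entered but not left by time $t$; $N(t)$ denotes the number of nodes present at time $t$, and $N(t) \geq N_{min}$ for all $t$. A node is active at time $t$ if it is present at time $t$ and has not crashed by time $t$. $D$ is an upper bound (unknown to the nodes) on message delay. Churn assumption: there is a constant $\alpha < 1$ such that for every time $t$, the total number of nodes that enter or leave during $[t, t+D]$ is at most $\alpha N(t)$. Failure assumption: there is a constant $\Delta < 1$ such that at any time $t$, at most $\Delta N(t)$ of the nodes present at time $t$ have crashed. Assume moreover $\alpha \leq 1 - 2^{-1/4}$ and $1 < ((1-\alpha)^3 - \Delta(1+\alpha)^3) N_{min}$. *)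

(* Defs.v *)
From Stdlib Require Import Reals List.
Open Scope R_scope.

Section Model.
Context {Node : Type}.
(* init p : p belongs to the initial set S_0 (present at time 0 without an Enter).
   enter p / leave p / crash p : time of the (unique, if any) Enter(p) /
   Leave(p) / Crash(p) signal; None = no such signal ever. *)
Variables (init : Node -> Prop) (enter leave crash : Node -> option R).

Definition entered_by (p : Node) (t : R) : Prop :=
  init p \/ exists e, enter p = Some e /\ e <= t.
Definition left_by (p : Node) (t : R) : Prop :=
  exists l, leave p = Some l /\ l <= t.
Definition crashed_by (p : Node) (t : R) : Prop :=
  exists c, crash p = Some c /\ c <= t.
Definition present (p : Node) (t : R) : Prop :=
  entered_by p t /\ ~ left_by p t.
Definition active (p : Node) (t : R) : Prop :=
  present p t /\ ~ crashed_by p t.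
Definition enters_during (p : Node) (a b : R) : Prop :=
  exists e, enter p = Some e /\ a <= e <= b.
Definition leaves_during (p : Node) (a b : R) : Prop :=
  exists l, leave p = Some l /\ a <= l <= b.
End Model.

Definition is_card {A : Type} (P : A -> Prop) (n : nat) : Prop :=
  exists l : list A, NoDup l /\ (forall x, In x l <-> P x) /\ length l = n.

(* Main.v *)
Require Import Defs.
From Stdlib Require Import Reals List.
From Stdlib Require Import Lra Psatz Classical ClassicalEpsilon.
Open Scope R_scope.

Definition filterP {A : Type} (P : A -> Prop) (l : list A) : list A :=
  filter (fun x => if excluded_middle_informative (P x) then true else false) l.

Lemma filterP_In {A : Type} (P : A -> Prop) l x : In x (filterP P l) <-> In x l /\ P x.
Proof.
  unfold filterP. rewrite filter_In.
  destruct (excluded_middle_informative (P x)); intuition congruence.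
Qed.

Lemma filterP_NoDup {A : Type} (P : A -> Prop) l : NoDup l -> NoDup (filterP P l).
Proof. apply NoDup_filter. Qed.

Lemma filterP_len {A : Type} (P : A -> Prop) l :
  length l = (length (filterP P l) + length (filterP (fun x => ~ P x) l))%nat.
Proof.
  induction l as [|a l IH]; simpl; auto.
  unfold filterP in *; simpl.
  destruct (excluded_middle_informative (P a));
  destruct (excluded_middle_informative (~ P a)); try tauto; simpl; lia.
Qed.

Lemma len_le {A : Type} (l1 l2 : list A) : NoDup l1 -> (forall x, In x l1 -> In x l2) ->
  INR (length l1) <= INR (length l2).
Proof. intros H1 H2. apply le_INR. apply NoDup_incl_length; auto. Qed.

Definition leaveIn {Node : Type} (leave : Node -> option R) (a b : R) (p : Node) : Prop :=
  exists l, leave p = Some l /\ a < l <= b.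

Lemma present_mono {Node : Type} init enter (leave : Node -> option R) p a b :
  present init enter leave p a -> ~ leaveIn leave a b p -> a <= b -> present init enter leave p b.
Proof.
  intros [[Hi|[e [He Hea]]] Hnl] Hnot Hab; split.
  - left; auto.
  - intros [l [Hl Hlb]]. destruct (Rle_dec l a).
    + apply Hnl; exists l; auto.
    + apply Hnot; exists l; split; auto; lra.
  - right; exists e; split; auto; lra.
  - intros [l [Hl Hlb]]. destruct (Rle_dec l a).
    + apply Hnl; exists l; auto.
    + apply Hnot; exists l; split; auto; lra.
Qed.

Section Step.
Variables (Node : Type) (init : Node -> Prop) (enter leave : Node -> option R)
  (N : R -> nat) (D alpha : R).
Hypothesis HN : forall t, 0 <= t -> is_card (fun p => present init enter leave p t) (N t).
Hypothesis Hchurn : forall t, 0 <= t ->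
     forall l1 l2 : list Node, NoDup l1 -> NoDup l2 ->
     (forall p, In p l1 -> enters_during enter p t (t + D)) ->
     (forall p, In p l2 -> leaves_during leave p t (t + D)) ->
     INR (length l1 + length l2) <= alpha * INR (N t).

Lemma step a s (Ha : 0 <= a) (Has : a <= s) (Hs : s <= a + D) (L : list Node)
  (HL : NoDup L) (HLp : forall p, In p L -> present init enter leave p a /\ leaveIn leave a s p) :
  exists e : nat, INR (N s) + INR (length L) <= INR (N a) + INR e /\
                  INR (length L) + INR e <= alpha * INR (N a) /\ 0 <= INR e.
Proof.
  destruct (HN a Ha) as [Pa [NDa [HPa LPa]]].
  destruct (HN s ltac:(lra)) as [Ps [NDs [HPs LPs]]].
  set (F := filterP (fun p => ~ present init enter leave p a) Ps).
  set (G := filterP (fun p => present init enter leave p a) Ps).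
  exists (length F).
  assert (E1 := filterP_len (fun p => present init enter leave p a) Ps).
  assert (E2 := filterP_len (leaveIn leave a s) Pa).
  assert (I1 : INR (length L) <= INR (length (filterP (leaveIn leave a s) Pa))).
  { apply len_le; auto. intros x Hx. apply filterP_In. destruct (HLp x Hx).
    split; auto. apply HPa; auto. }
  assert (I2 : INR (length G) <= INR (length (filterP (fun x => ~ leaveIn leave a s x) Pa))).
  { apply len_le. apply filterP_NoDup; auto. intros x Hx. unfold G in Hx.
    apply filterP_In in Hx. destruct Hx as [Hx1 Hx2]. apply filterP_In. split.
    - apply HPa; auto.
    - apply HPs in Hx1. intros [l [Hl Hl2]]. apply (proj2 Hx1). exists l; split; auto; lra. }
  assert (C := Hchurn a Ha F L (filterP_NoDup _ _ NDs) HL).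
  assert (C' : INR (length F + length L) <= alpha * INR (N a)).
  { apply C.
    - intros p Hp. unfold F in Hp. apply filterP_In in Hp. destruct Hp as [Hp1 Hp2].
      apply HPs in Hp1. destruct Hp1 as [Hen Hnl].
      destruct Hen as [Hi|[e [He Hes]]].
      + exfalso. apply Hp2. split. left; auto. intros [l [Hl Hla]]. apply Hnl. exists l; split; auto; lra.
      + exists e; split; auto. destruct (Rle_dec e a).
        * exfalso. apply Hp2. split. right; exists e; auto. intros [l [Hl Hla]]. apply Hnl. exists l; split; auto; lra.
        * lra.
    - intros p Hp. destruct (HLp p Hp) as [_ [l [Hl Hl2]]]. exists l; split; auto; lra. }
  rewrite plus_INR in C'.
  assert (EE1 : N s = (length G + length F)%nat) by (rewrite <- LPs; exact E1).
  assert (EE2 : N a = (length (filterP (leaveIn leave a s) Pa) + length (filterP (fun x => ~ leaveIn leave a s x) Pa))%nat) by (rewrite <- LPa; exact E2).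
  rewrite EE2, plus_INR in C'. rewrite EE1, EE2, !plus_INR.
  assert (0 <= INR (length F)) by apply pos_INR.
  split; [|split]; lra.
Qed.
End Step.
Lemma ypow (alpha : R) (Halpha : alpha <= 1 - Rpower 2 (- (1/4))) : 1 - 4*alpha + 2*alpha^2 >= 0 /\ alpha <= 1.
Proof.
  remember (Rpower 2 (- (1/4))) as y eqn:Hyd.
  assert (Hy0 : 0 < y) by (rewrite Hyd; unfold Rpower; apply exp_pos).
  assert (Hy4 : y ^ 4 = / 2).
  { rewrite <- Rpower_pow by lra. rewrite Hyd, Rpower_mult.
    replace (- (1/4) * INR 4) with (Ropp 1) by (simpl; lra).
    rewrite Rpower_Ropp, Rpower_1; lra. }
  assert (y^2 <= 1) by (timeout 10 nra).
  assert (y^2 >= /2) by (timeout 10 nra).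
  split; timeout 10 nra.
Qed.
Lemma arith (alpha Delta n0 n1 n2 ns a1 a2 a3 b e1 e2 e3 Nm : R)
  (Ha0 : 0 <= alpha) (Hy : 1 - 4*alpha + 2*alpha^2 >= 0) (Ha1 : alpha <= 1)
  (HD0 : 0 <= Delta)
  (Hn0 : n0 = a1 + a2 + a3 + b)
  (H1 : n1 + a1 <= n0 + e1) (H1' : a1 + e1 <= alpha * n0)
  (H2 : n2 + a2 <= n1 + e2) (H2' : a2 + e2 <= alpha * n1)
  (H3 : a3 + e3 <= alpha * n2)
  (Hb : b <= Delta * ns) (Hns : ns <= (1+alpha)^3 * n0)
  (Hpos : 0 <= a1 /\ 0 <= a2 /\ 0 <= a3 /\ 0 <= b /\ 0 <= e1 /\ 0 <= e2 /\ 0 <= e3 /\ 0 <= n1 /\ 0 <= n2)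
  (HNm : Nm <= n0) (HNm0 : 0 <= Nm)
  (Hc : 1 < ((1 - alpha) ^ 3 - Delta * (1 + alpha) ^ 3) * Nm) : False.
Proof.
  destruct Hpos as (?&?&?&?&?&?&?&?&?).
  assert (S2 : alpha * n2 <= alpha * (n1 + e2 - a2)) by (apply Rmult_le_compat_l; lra).
  assert (S3a : 1 - 2*alpha >= 0) by (timeout 10 nra).
  assert (S3 : (1 - 2*alpha) * e2 >= 0) by (apply Rle_ge, Rmult_le_pos; lra).
  assert (S4 : a1 + a2 + a3 <= a1 + (1-alpha)*(a2+e2) + alpha*n1) by (timeout 10 lra).
  assert (S5 : (1-alpha)*(a2+e2) <= (1-alpha)*(alpha*n1)) by (apply Rmult_le_compat_l; lra).
  assert (S6 : alpha*(2-alpha)*n1 <= alpha*(2-alpha)*(n0+e1-a1)) by (apply Rmult_le_compat_l; [apply Rmult_le_pos|]; lra).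
  assert (S7 : ((1-alpha)^2 - alpha*(2-alpha))*e1 >= 0) by (apply Rle_ge, Rmult_le_pos; [timeout 10 nra|lra]).
  assert (S8 : (1-alpha)^2*(a1+e1) <= (1-alpha)^2*(alpha*n0)) by (apply Rmult_le_compat_l; [apply pow2_ge_0|lra]).
  assert (S9 : a1 + a2 + a3 <= (1 - (1-alpha)^3) * n0) by (timeout 10 lra).
  assert (S10 : Delta * ns <= Delta * ((1+alpha)^3 * n0)) by (apply Rmult_le_compat_l; lra).
  assert (S11 : 0 <= ((1 - alpha) ^ 3 - Delta * (1 + alpha) ^ 3)).
  { destruct (Rle_dec 0 ((1 - alpha) ^ 3 - Delta * (1 + alpha) ^ 3)); auto.
    exfalso. assert (((1 - alpha) ^ 3 - Delta * (1 + alpha) ^ 3) * Nm <= 0) by (rewrite <- (Rmult_0_l Nm); apply Rmult_le_compat_r; lra). lra. }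
  assert (S12 : ((1 - alpha) ^ 3 - Delta * (1 + alpha) ^ 3) * Nm <= ((1 - alpha) ^ 3 - Delta * (1 + alpha) ^ 3) * n0) by (apply Rmult_le_compat_l; lra).
  timeout 10 lra.
Qed.

Theorem lemma3 (Node : Type) (init : Node -> Prop) (enter leave crash : Node -> option R)
  (N : R -> nat) (Nmin : nat) (D alpha Delta : R)
  (HD : 0 < D)
  (Henter0 : forall p e, enter p = Some e -> 0 <= e)
  (Hleave0 : forall p l, leave p = Some l -> 0 <= l)
  (Hcrash0 : forall p c, crash p = Some c -> 0 <= c)
  (HN : forall t, 0 <= t -> is_card (fun p => present init enter leave p t) (N t))
  (HNmin : forall t, 0 <= t -> (Nmin <= N t)%nat)
  (Halpha0 : 0 <= alpha) (Halpha1 : alpha < 1)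
  (HDelta0 : 0 <= Delta) (HDelta1 : Delta < 1)
  (Hchurn : forall t, 0 <= t ->
     forall l1 l2 : list Node, NoDup l1 -> NoDup l2 ->
     (forall p, In p l1 -> enters_during enter p t (t + D)) ->
     (forall p, In p l2 -> leaves_during leave p t (t + D)) ->
     INR (length l1 + length l2) <= alpha * INR (N t))
  (Hfail : forall t, 0 <= t ->
     forall l : list Node, NoDup l ->
     (forall p, In p l -> present init enter leave p t /\ crashed_by crash p t) ->
     INR (length l) <= Delta * INR (N t))
  (Halpha : alpha <= 1 - Rpower 2 (- (1/4)))
  (HNmin1 : 1 < ((1 - alpha) ^ 3 - Delta * (1 + alpha) ^ 3) * INR Nmin) :
  forall t, 0 < t ->
  exists p : Node, forall s, Rmax 0 (t - 2 * D) <= s <= t + D ->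
    active init enter leave crash p s.
Proof.
  intros t Ht.
  remember (Rmax 0 (t - 2 * D)) as T0 eqn:HT0.
  assert (HT0a : 0 <= T0) by (subst; apply Rmax_l).
  assert (HT0b : t - 2 * D <= T0) by (subst; apply Rmax_r).
  assert (HT0c : T0 < t) by (subst; apply Rmax_lub_lt; lra).
  apply NNPP; intro Hno.
  assert (Hno' : forall p, exists s, T0 <= s <= t + D /\ ~ active init enter leave crash p s).
  { intro p. apply NNPP; intro H. apply Hno. exists p. intros s Hs.
    apply NNPP; intro H'. apply H. exists s; auto. }
  clear Hno.
  destruct (HN T0 HT0a) as [P0 [ND0 [HP0 LP0]]].
  set (T1 := T0 + D). set (T2 := T1 + D). set (T3 := T2 + D).
  set (A1 := filterP (leaveIn leave T0 T1) P0).
  set (R1 := filterP (fun p => ~ leaveIn leave T0 T1 p) P0).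
  set (A2 := filterP (leaveIn leave T1 T2) R1).
  set (R2 := filterP (fun p => ~ leaveIn leave T1 T2 p) R1).
  set (A3 := filterP (leaveIn leave T2 T3) R2).
  set (B := filterP (fun p => ~ leaveIn leave T2 T3 p) R2).
  assert (EA := filterP_len (leaveIn leave T0 T1) P0).
  assert (EB := filterP_len (leaveIn leave T1 T2) R1).
  assert (EC := filterP_len (leaveIn leave T2 T3) R2).
  fold A1 R1 A2 R2 A3 B in EA, EB, EC.
  assert (ND1 : NoDup R1) by (apply filterP_NoDup; auto).
  assert (ND2 : NoDup R2) by (apply filterP_NoDup; auto).
  assert (PR1 : forall p, In p R1 -> present init enter leave p T1).
  { intros p Hp. unfold R1 in Hp. apply filterP_In in Hp. destruct Hp as [Hp1 Hp2].
    apply HP0 in Hp1. apply (present_mono _ _ _ _ T0); auto. unfold T1; lra. }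
  assert (PR2 : forall p, In p R2 -> present init enter leave p T2).
  { intros p Hp. unfold R2 in Hp. apply filterP_In in Hp. destruct Hp as [Hp1 Hp2].
    apply (present_mono _ _ _ _ T1); auto. unfold T2; lra. }
  destruct (step Node init enter leave N D alpha HN Hchurn T0 T1 HT0a ltac:(unfold T1; lra) ltac:(unfold T1; lra) A1)
    as [e1 [H1 [H1' He1]]].
  { apply filterP_NoDup; auto. }
  { intros p Hp. unfold A1 in Hp. apply filterP_In in Hp. destruct Hp. split; auto. apply HP0; auto. }
  destruct (step Node init enter leave N D alpha HN Hchurn T1 T2 ltac:(unfold T1; lra) ltac:(unfold T2; lra) ltac:(unfold T2; lra) A2)
    as [e2 [H2 [H2' He2]]].
  { apply filterP_NoDup; auto. }
  { intros p Hp. unfold A2 in Hp. apply filterP_In in Hp. destruct Hp. split; auto. }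
  destruct (step Node init enter leave N D alpha HN Hchurn T2 T3 ltac:(unfold T2, T1; lra) ltac:(unfold T3; lra) ltac:(unfold T3; lra) A3)
    as [e3 [H3 [H3' He3]]].
  { apply filterP_NoDup; auto. }
  { intros p Hp. unfold A3 in Hp. apply filterP_In in Hp. destruct Hp. split; auto. }
  assert (HB : forall p, In p B -> present init enter leave p (t + D) /\ crashed_by crash p (t + D)).
  { intros p Hp. unfold B in Hp. apply filterP_In in Hp. destruct Hp as [Hp Hn3].
    unfold R2 in Hp. apply filterP_In in Hp. destruct Hp as [Hp Hn2].
    unfold R1 in Hp. apply filterP_In in Hp. destruct Hp as [Hp Hn1].
    apply HP0 in Hp.
    assert (Hn : ~ leaveIn leave T0 T3 p).
    { intros [l [Hl Hl2]].
      destruct (Rle_dec l T1). apply Hn1; exists l; split; auto; lra.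
      destruct (Rle_dec l T2). apply Hn2; exists l; split; auto; lra.
      apply Hn3; exists l; split; auto; lra. }
    assert (Hall : forall s, T0 <= s <= T3 -> present init enter leave p s).
    { intros s Hs. apply (present_mono _ _ _ _ T0); try lra; auto.
      intros [l [Hl Hl2]]. apply Hn. exists l; split; auto; lra. }
    destruct (Hno' p) as [s [Hs Hna]].
    assert (Hps : present init enter leave p s) by (apply Hall; unfold T3, T2, T1; lra).
    split. apply Hall; unfold T3, T2, T1; lra.
    destruct (classic (crashed_by crash p s)) as [[c [Hc Hcs]]|Hnc].
    - exists c; split; auto; lra.
    - exfalso; apply Hna; split; auto. }
  assert (Hb := Hfail (t + D) ltac:(lra) B ltac:(apply filterP_NoDup; auto) HB).
  assert (Hns : INR (N (t + D)) <= (1 + alpha) ^ 3 * INR (N T0)).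
  { assert (0 <= INR (N T0)) by apply pos_INR.
    assert (0 <= INR (N T1)) by apply pos_INR.
    assert (0 <= INR (N T2)) by apply pos_INR.
    assert (0 <= INR (length A1)) by apply pos_INR.
    assert (0 <= INR (length A2)) by apply pos_INR.
    assert (G1 : INR (N T1) <= (1 + alpha) * INR (N T0)) by lra.
    assert (G2 : INR (N T2) <= (1 + alpha) * INR (N T1)) by lra.
    assert (Q1 : (1 + alpha) * INR (N T1) <= (1 + alpha) * ((1 + alpha) * INR (N T0)))
      by (apply Rmult_le_compat_l; lra).
    destruct (Rle_dec (t + D) T2).
    - destruct (step Node init enter leave N D alpha HN Hchurn T1 (t + D) ltac:(unfold T1; lra) ltac:(unfold T1; lra) ltac:(unfold T2 in *; lra) nil)
        as [e [He [He' _]]].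
      { constructor. }
      { intros p []. }
      simpl in He, He'.
      assert (alpha * ((1 + alpha) * ((1 + alpha) * INR (N T0))) >= 0).
      { apply Rle_ge, Rmult_le_pos; auto. apply Rmult_le_pos; lra. }
      assert (INR (N (t + D)) <= (1 + alpha) * INR (N T1)) by lra.
      simpl. lra.
    - destruct (step Node init enter leave N D alpha HN Hchurn T2 (t + D) ltac:(unfold T2, T1; lra) ltac:(lra) ltac:(unfold T2, T1 in *; lra) nil)
        as [e [He [He' _]]].
      { constructor. }
      { intros p []. }
      simpl in He, He'.
      assert (Q2 : (1 + alpha) * INR (N T2) <= (1 + alpha) * ((1 + alpha) * ((1 + alpha) * INR (N T0)))).
      { apply Rmult_le_compat_l; lra. }
      simpl. lra. }
  destruct (ypow alpha Halpha) as [Hy Ha1].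
  assert (HNm := HNmin T0 HT0a).
  apply le_INR in HNm.
  apply (arith alpha Delta (INR (N T0)) (INR (N T1)) (INR (N T2)) (INR (N (t + D)))
     (INR (length A1)) (INR (length A2)) (INR (length A3)) (INR (length B))
     (INR e1) (INR e2) (INR e3) (INR Nmin)); auto.
  - rewrite <- LP0, EA, EB, EC, !plus_INR. ring.
  - repeat split; try apply pos_INR.
  - apply pos_INR.
Qed.
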